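(* Let $G$ be a complete bipartite graph (with both parts nonempty). Then $c(G) = \min\{2, \delta(G)\}$, $c_{V,\mathrm{r}}(G) = \delta(G)$, and $c_V(G) = c_{E,\mathrm{r}}(G) = c_E(G) = \Delta(G)$.
   Context: $\delta(G)$ and $\Delta(G)$ denote minimum and maximum degree. In all games the players alternate turns, cops first; initially the cop player places all cops, then the robber player places the robber on a vertex (several pieces may share a position). In a turn each piece of the moving player may stay or make one move (no obligation to move). The robber always sits on vertices and moves to an adjacent vertex; $v_r$ denotes his current vertex. Classical version: cops on vertices moving to adjacent vertices; cops win if a cop is on $v_r$; $c(G)$ is the least number of cops that can force a win in finitely many turns. Vertex version: cops on vertices; cops win when every neighbor of $v_r$ is occupied by a cop; number $c_V(G)$. Edge version: cops sit on edges; a cop on edge $e$ may move to any edge sharing an endpoint with $e$; cops win when every edge incident to $v_r$ is occupied; number $c_E(G)$. Restrictive vertex version: as the vertex version, but after each robber turn (including his initial placement) no cop may be on $v_r$; in particular the robber may not move onto a cop-occupied vertex, and if a cop moves onto $v_r$ the robber must leave in his next turn; number $c_{V,\mathrm{r}}(G)$. Restrictive edge version: as the edge version, but the robber may not move along an edge currently occupied by a cop; number $c_{E,\mathrm{r}}(G)$. *)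

(* Defs.v *)
From mathcomp Require Import all_boot all_order.
Set Implicit Arguments. Unset Strict Implicit. Unset Printing Implicit Defensive.

(* A finite simple graph is given by a relation [e : rel T] on a finType [T]. *)

Definition deg (T : finType) (e : rel T) (v : T) : nat := #|[set u | e v u]|.
(* minimum degree (for nonempty T; the seed #|T| exceeds every degree) *)
Definition mindeg (T : finType) (e : rel T) : nat :=
  \big[minn/#|T|]_(v : T) deg e v.
Definition maxdeg (T : finType) (e : rel T) : nat := \max_(v : T) deg e v.

Definition complete_bipartite (T : finType) (e : rel T) (A : {set T}) : Prop :=
  [/\ A != set0, ~: A != set0 & forall x y, e x y = ((x \in A) != (y \in A))].

(** Generic cops-and-robber game.
   - [P] : type of cop positions, [cvalid] the legal positions,
   - [cmove p p'] : a cop at p may stay or move to p' in one turn,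
   - [won O r] : cops have won when the set of occupied positions is [O]
                 and the robber is at [r],
   - [rmove O r r'] : robber at r may (stay or) move to r' given occupied set O,
   - [rstart O r] : robber may be placed at r given occupied set O.
   Cops move first (after the initial placement); the win condition is
   checked after every move. *)
Section Game.
Variables (T P : finType) (cvalid : pred P) (cmove : rel P)
  (won : pred P -> T -> bool) (rmove : pred P -> T -> T -> bool)
  (rstart : pred P -> T -> bool).

Definition occ (k : nat) (c : {ffun 'I_k -> P}) : pred P :=
  fun p => [exists i, c i == p].

(* [cwin c r] : cops (to move, in configuration c, robber at r, game not yet
   won) can force a win in finitely many turns. *)
Inductive cwin (k : nat) : {ffun 'I_k -> P} -> T -> Prop :=
| CWin (c c' : {ffun 'I_k -> P}) (r : T) :
    (forall i, cmove (c i) (c' i)) ->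
    (won (occ c') r \/
     (forall r', rmove (occ c') r r' -> won (occ c') r' \/ cwin c' r')) ->
    cwin c r.

Definition cops_win (k : nat) : Prop :=
  exists c : {ffun 'I_k -> P}, (forall i, cvalid (c i)) /\
    forall r, rstart (occ c) r -> won (occ c) r \/ cwin c r.

Definition game_number (n : nat) : Prop :=
  cops_win n /\ forall m, m < n -> ~ cops_win m.
End Game.

Section Versions.
Variables (T : finType) (e : rel T).

(* edges as 2-element vertex sets *)
Definition is_edge (S : {set T}) : bool :=
  [exists x, exists y, e x y && (S == [set x; y])].

Definition vstep : rel T := fun x y => (x == y) || e x y.
Definition estep : rel {set T} :=
  fun S S' => (S == S') || (is_edge S' && ~~ [disjoint S & S']).

Definition c_number (n : nat) : Prop :=
  game_number (P := T) predT vstep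
    (fun O r => O r) (fun _ => vstep) (fun _ _ => true) n.

Definition v_won (O : pred T) (r : T) : bool := [forall u, e r u ==> O u].
Definition cV_number (n : nat) : Prop :=
  game_number (P := T) predT vstep v_won (fun _ => vstep) (fun _ _ => true) n.

Definition cVr_number (n : nat) : Prop :=
  game_number (P := T) predT vstep v_won
    (fun O r r' => vstep r r' && ~~ O r') (fun O r => ~~ O r) n.

Definition e_won (O : pred {set T}) (r : T) : bool :=
  [forall u, e r u ==> O [set r; u]].
Definition cE_number (n : nat) : Prop :=
  game_number is_edge estep e_won (fun _ => vstep) (fun _ _ => true) n.

Definition cEr_number (n : nat) : Prop :=
  game_number is_edge estep e_won
    (fun O r r' => (r == r') || (e r r' && ~~ O [set r; r']))
    (fun _ _ => true) n.
End Versions.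

(* Main.v *)
Require Import Defs.
From mathcomp Require Import all_boot all_order.
Set Implicit Arguments. Unset Strict Implicit. Unset Printing Implicit Defensive.
Section Gen.
Variables (T P : finType) (cvalid : pred P) (cmove : rel P)
  (won : pred P -> T -> bool) (rmove : pred P -> T -> T -> bool)
  (rstart : pred P -> T -> bool).

Lemma upper_one k (c : {ffun 'I_k -> P}) :
  (forall i, cvalid (c i)) ->
  (forall r, rstart (occ c) r -> won (occ c) r \/
     exists c' : {ffun 'I_k -> P}, (forall i, cmove (c i) (c' i)) /\ won (occ c') r) ->
  cops_win cvalid cmove won rmove rstart k.
Proof.
move=> hv hw; exists c; split=> // r /hw [->|[c' [hm hw']]]; first by left.
by right; apply: (CWin hm); left.
Qed.

Lemma lower k (I : {ffun 'I_k -> P} -> T -> Prop) :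
  (forall c : {ffun 'I_k -> P}, (forall i, cvalid (c i)) ->
     exists r, [/\ rstart (occ c) r, ~~ won (occ c) r & I c r]) ->
  (forall (c c' : {ffun 'I_k -> P}) r, I c r -> (forall i, cmove (c i) (c' i)) ->
     ~~ won (occ c') r /\
     exists r', [/\ rmove (occ c') r r', ~~ won (occ c') r' & I c' r']) ->
  ~ cops_win cvalid cmove won rmove rstart k.
Proof.
move=> hs hst [c [hv hw]].
have [r [hr hnw hI]] := hs c hv.
case: (hw r hr) => [hwon|hcw]; first by rewrite hwon in hnw.
have key : forall c r, cwin cmove won rmove c r -> I c r -> False.
  fix IH 3.
  move=> c0 r0 h; case: h => c1 c2 r1 hm hor hI1.
  have [hn [r' [hrm hn' hI']]] := hst c1 c2 r1 hI1 hm.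
  case: hor => [hw1|hall]; first by rewrite hw1 in hn.
  case: (hall r' hrm) => [hw2|hc]; first by rewrite hw2 in hn'.
  exact: (IH _ _ hc hI').
exact: (key _ _ hcw hI).
Qed.
End Gen.

Lemma card_occ (P : finType) k (c : {ffun 'I_k -> P}) : #|[set p | occ c p]| <= k.
Proof.
have sub : [set p | occ c p] \subset [set c i | i in 'I_k].
  apply/subsetP => p; rewrite inE => /existsP [i /eqP <-]; exact: imset_f.
by apply: (leq_trans (subset_leq_card sub)); rewrite (leq_trans (leq_imset_card _ _)) ?card_ord.
Qed.

Lemma occ0 (P : finType) (c : {ffun 'I_0 -> P}) p : occ c p = false.
Proof. by apply/existsP => [[[i hi]]]. Qed.

Lemma occ1 (P : finType) (c : {ffun 'I_1 -> P}) p : occ c p = (c ord0 == p).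
Proof. by apply/existsP/eqP => [[i /eqP <-]|<-]; [rewrite (ord1 i) | exists ord0]. Qed.

Lemma nth_in (T : finType) (S : {set T}) x0 i : x0 \in S -> nth x0 (enum S) i \in S.
Proof.
move=> h; case: (ltnP i (size (enum S))) => hi; first by rewrite -mem_enum mem_nth.
by rewrite nth_default.
Qed.

Lemma occ_enum (T P : finType) (S : {set T}) x0 k (f : T -> P) u :
  #|S| <= k -> u \in S ->
  occ [ffun i : 'I_k => f (nth x0 (enum S) i)] (f u).
Proof.
move=> hk hu; have hi : index u (enum S) < k.
  by apply: leq_trans hk; rewrite cardE index_mem mem_enum.
apply/existsP; exists (Ordinal hi); rewrite ffunE /= nth_index //.
by rewrite mem_enum.
Qed.

Lemma bigmin_le (T : eqType) (s : seq T) F x0 v :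
  v \in s -> \big[minn/x0]_(u <- s) F u <= F v.
Proof.
elim: s => [//|a s IH]; rewrite inE big_cons geq_min => /orP [/eqP ->|/IH ->].
  by rewrite leqnn. by rewrite orbT.
Qed.

Lemma bigmin_ge (T : eqType) (s : seq T) F x0 m :
  m <= x0 -> (forall v, m <= F v) -> m <= \big[minn/x0]_(u <- s) F u.
Proof.
move=> h0 hF; elim: s => [|a s IH]; first by rewrite big_nil.
by rewrite big_cons leq_min hF IH.
Qed.

Section Bip.
Variables (T : finType) (e : rel T) (A : {set T}) (xA xB : T).
Hypotheses (hxA : xA \in A) (hxB : xB \notin A)
  (he : forall x y, e x y = ((x \in A) != (y \in A))) (hab : #|A| <= #|~:A|).

Lemma degE x : deg e x = if x \in A then #|~:A| else #|A|.
Proof.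
rewrite /deg; case: ifP => hx;
  [have -> : [set u | e x u] = ~: A | have -> : [set u | e x u] = A] => //;
  apply/setP => u; rewrite !inE he hx; by case: (u \in A).
Qed.

Lemma mindegE : mindeg e = #|A|.
Proof.
apply/eqP; rewrite eqn_leq; apply/andP; split.
  have := bigmin_le (fun v => deg e v) #|T| (mem_index_enum xB).
  by rewrite degE (negbTE hxB).
apply: bigmin_ge; first exact: max_card.
by move=> v; rewrite degE; case: ifP.
Qed.

Lemma maxdegE : maxdeg e = #|~:A|.
Proof.
apply/eqP; rewrite eqn_leq; apply/andP; split.
  by apply/bigmax_leqP => v _; rewrite degE; case: ifP.
by have := @leq_bigmax _ (fun v => deg e v) xA; rewrite degE hxA.
Qed.

Lemma vwon_bound (O : pred T) r : v_won e O r -> deg e r <= #|[set p | O p]|.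
Proof.
move=> /forallP h; apply: subset_leq_card; apply/subsetP => u.
by rewrite !inE => hu; have := h u; rewrite hu.
Qed.

Lemma ewon_bound (O : pred {set T}) r : e_won e O r -> deg e r <= #|[set p | O p]|.
Proof.
move=> /forallP h.
have -> : deg e r = #|[set [set r; u] | u in [set u | e r u]]|.
  rewrite card_in_imset // => u v; rewrite !inE => hu hv huv.
  have : u \in [set r; v] by rewrite -huv !inE eqxx orbT.
  rewrite !inE => /orP [/eqP ur|/eqP //].
  by move: hu; rewrite ur he eqxx.
apply: subset_leq_card; apply/subsetP => S /imsetP [u]; rewrite inE => hu ->.
by rewrite inE; have := h u; rewrite hu.
Qed.

Lemma other p : 2 <= #|A| -> exists q, q != p /\ (q \in A) = (p \in A).
Proof.
move=> h2.
have [S hS hp] : exists2 S : {set T}, 2 <= #|S| & p \in S /\ (forall q, (q \in S) = ((q \in A) == (p \in A))).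
  case hpA: (p \in A).
    by exists A => //; split => // q; rewrite eqb_id.
  exists (~: A); first exact: leq_trans hab.
  by split; rewrite ?inE ?hpA // => q; rewrite inE eqbF_neg.
case: hp => hp hSq.
have : 0 < #|S :\ p| by move: hS; rewrite (cardsD1 p S) hp.
rewrite card_gt0 => /set0Pn [q]; rewrite !inE => /andP [hqp hq].
by exists q; split => //; move: hq; rewrite hSq => /eqP.
Qed.

Definition a_ i := nth xA (enum A) i.
Definition b_ i := nth xB (enum (~: A)) i.
Lemma a_in i : a_ i \in A. Proof. exact: nth_in. Qed.
Lemma b_in i : b_ i \notin A.
Proof. by have := @nth_in _ (~: A) xB i; rewrite !inE; apply. Qed.


Lemma degA r : r \in A -> deg e r = #|~:A|.
Proof. by move=> h; rewrite degE h. Qed.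
Lemma degB r : r \notin A -> deg e r = #|A|.
Proof. by move=> h; rewrite degE (negbTE h). Qed.
Lemma deg_ge r : #|A| <= deg e r.
Proof. by rewrite degE; case: ifP. Qed.

Lemma cV_ok : cV_number e #|~:A|.
Proof.
split.
  apply: (@upper_one _ _ _ _ _ _ _ _ [ffun i : 'I_#|~:A| => b_ i]) => // r _.
  case hr: (r \in A).
    left; apply/forallP => u; apply/implyP; rewrite he hr /= => hu.
    have hu' : u \in ~: A by rewrite inE.
    exact: (occ_enum xB (id) (leqnn _) hu').
  right; exists [ffun i : 'I_#|~:A| => a_ i]; split.
    by move=> i; rewrite !ffunE /vstep he a_in (negbTE (b_in _)) orbT.
  apply/forallP => u; apply/implyP; rewrite he hr => hu.
  have {}hu : u \in A by move: hu; case: (u \in A).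
  exact: (occ_enum xA (id) hab hu).
move=> m hm; apply: (@lower _ _ _ _ _ _ _ _ (fun _ r => r = xA)).
  move=> c _; exists xA; split => //; apply/negP => /vwon_bound.
  by rewrite degA //; move/leq_trans/(_ (card_occ c)); rewrite leqNgt hm.
move=> c c' r -> _.
have nw : ~~ v_won e (occ c') xA.
  apply/negP => /vwon_bound.
  by rewrite degA //; move/leq_trans/(_ (card_occ c')); rewrite leqNgt hm.
by split => //; exists xA; rewrite /vstep eqxx.
Qed.

Lemma cVr_ok : cVr_number e #|A|.
Proof.
split.
  apply: (@upper_one _ _ _ _ _ _ _ _ [ffun i : 'I_#|A| => a_ i]) => // r hr.
  have hrA : r \notin A.
    apply/negP => hA; move: hr; rewrite (occ_enum xA (id) (leqnn _) hA).
    by [].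
  left; apply/forallP => u; apply/implyP; rewrite he (negbTE hrA) => hu.
  have {}hu : u \in A by move: hu; case: (u \in A).
  exact: (occ_enum xA (id) (leqnn _) hu).
move=> m hm.
have nw : forall (c : {ffun 'I_m -> T}) r, ~~ v_won e (occ c) r.
  move=> c r; apply/negP => /vwon_bound h.
  have := leq_trans (deg_ge r) (leq_trans h (card_occ c)).
  by rewrite leqNgt hm.
apply: (@lower _ _ _ _ _ _ _ _ (fun _ _ => True)).
  move=> c _.
  case: (boolP [exists r, ~~ occ c r]) => [/existsP [r hr]|].
    by exists r; split; rewrite ?nw.
  rewrite negb_exists => /forallP hall.
  have : #|T| <= m.
    apply: leq_trans (card_occ c); apply: subset_leq_card; apply/subsetP => u _.
    by rewrite inE; have := hall u; rewrite negbK.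
  by move/(leq_trans (max_card A)); rewrite leqNgt hm.
move=> c c' r _ _; split; first exact: nw.
case: (boolP (occ c' r)) => hr; last by exists r; rewrite /vstep eqxx hr nw.
have := nw c' r; rewrite negb_forall => /existsP [u]; rewrite negb_imply.
move=> /andP [hu hnu]; exists u; split; [ | exact: nw | by []].
by rewrite /vstep hu orbT.
Qed.

Lemma is_edge_ab x y : x \in A -> y \notin A -> is_edge e [set x; y].
Proof.
move=> hx hy; apply/existsP; exists x; apply/existsP; exists y.
by rewrite he hx (negbTE hy) eqxx.
Qed.

Lemma estep_share (S S' : {set T}) z : is_edge e S' -> z \in S -> z \in S' -> estep e S S'.
Proof.
move=> h hz hz'; apply/orP; right; rewrite h /=.
by apply/negP => /disjointFr /(_ hz); rewrite hz'.
Qed.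

Lemma cE_upper rmove rstart :
  cops_win (is_edge e) (estep e) (e_won e) rmove rstart #|~:A|.
Proof.
apply: (@upper_one _ _ _ _ _ _ _ _ [ffun i : 'I_#|~:A| => [set a_ i; b_ i]]).
  by move=> i; rewrite ffunE is_edge_ab ?a_in ?b_in.
move=> r _; right.
case hr: (r \in A).
  exists [ffun i : 'I_#|~:A| => [set r; b_ i]]; split.
    move=> i; rewrite !ffunE; apply: (estep_share (z := b_ i)).
    - by rewrite is_edge_ab ?b_in.
    - by rewrite !inE eqxx orbT.
    - by rewrite !inE eqxx orbT.
  apply/forallP => u; apply/implyP; rewrite he hr /= => hu.
  have hu' : u \in ~: A by rewrite inE hu.
  exact: (occ_enum xB (fun x => [set r; x]) (leqnn _) hu').
exists [ffun i : 'I_#|~:A| => [set r; a_ i]]; split.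
  move=> i; rewrite !ffunE; apply: (estep_share (z := a_ i)).
  - by rewrite setUC is_edge_ab ?a_in ?hr.
  - by rewrite !inE eqxx.
  - by rewrite !inE eqxx orbT.
apply/forallP => u; apply/implyP; rewrite he hr => hu.
have {}hu : u \in A by move: hu; case: (u \in A).
exact: (occ_enum xA (fun x => [set r; x]) hab hu).
Qed.

Lemma cE_lower (rmove : pred {set T} -> T -> T -> bool) m :
  (forall O, rmove O xA xA) -> m < #|~:A| ->
  ~ cops_win (is_edge e) (estep e) (e_won e) rmove (fun _ _ => true) m.
Proof.
move=> hst hm.
have nw : forall (c : {ffun 'I_m -> {set T}}), ~~ e_won e (occ c) xA.
  move=> c; apply/negP => /ewon_bound.
  by rewrite degA //; move/leq_trans/(_ (card_occ c)); rewrite leqNgt hm.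
apply: (@lower _ _ _ _ _ _ _ _ (fun _ r => r = xA)).
  by move=> c _; exists xA; split; rewrite ?nw.
by move=> c c' r -> _; split; rewrite ?nw //; exists xA; split; rewrite ?nw.
Qed.

Lemma cE_ok : cE_number e #|~:A|.
Proof.
split; first exact: cE_upper.
by move=> m; apply: cE_lower => O; rewrite /vstep eqxx.
Qed.

Lemma cEr_ok : cEr_number e #|~:A|.
Proof.
split; first exact: cE_upper.
by move=> m; apply: cE_lower => O; rewrite eqxx.
Qed.


Lemma c_zero : ~ cops_win predT (vstep e) (fun O r => O r) (fun _ => vstep e)
                   (fun _ _ => true) 0.
Proof.
apply: (@lower _ _ _ _ _ _ _ _ (fun _ _ => True)).
  by move=> c _; exists xA; rewrite occ0.
by move=> c c' r _ _; rewrite occ0; split => //; exists r; rewrite /vstep eqxx occ0.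
Qed.

Lemma eAB x y : x \in A -> y \notin A -> e x y.
Proof. by move=> hx hy; rewrite he hx (negbTE hy). Qed.

Lemma c_ok : c_number e (minn 2 #|A|).
Proof.
have hA0 : 0 < #|A| by rewrite card_gt0; apply/set0Pn; exists xA.
case: (ltnP 1 #|A|) => h2.
  rewrite (minn_idPl h2); split.
    apply: (@upper_one _ _ _ _ _ _ _ _
      [ffun i : 'I_2 => if val i == 0 then xA else xB]) => // r _; right.
    case hr: (r \in A).
      exists [ffun i : 'I_2 => if val i == 0 then xA else r]; split.
        move=> i; rewrite !ffunE; case: ifP => _; rewrite /vstep ?eqxx //.
        by rewrite he hr (negbTE hxB) orbT.
      by apply/existsP; exists (@Ordinal 2 1 isT); rewrite ffunE.
    exists [ffun i : 'I_2 => if val i == 0 then r else xB]; split.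
      move=> i; rewrite !ffunE; case: ifP => _; rewrite /vstep ?eqxx ?orbT //.
      by rewrite he hr hxA orbT.
    by apply/existsP; exists (@Ordinal 2 0 isT); rewrite ffunE.
  move=> m; rewrite ltnS leq_eqVlt ltnS leqn0 => /orP [/eqP ->|/eqP ->];
    last exact: c_zero.
  have side : forall p q, (p \in A) = (q \in A) -> e p q = false.
    by move=> p q hpq; rewrite he hpq eqxx.
  apply: (@lower _ _ _ _ _ _ _ _ (fun c r => ~~ vstep e (c ord0) r)).
    move=> c _; have [q [hq hs]] := other (c ord0) h2.
    exists q; split => //; first by rewrite occ1 eq_sym.
    by rewrite /vstep negb_or eq_sym hq side.
  move=> c c' r hI hm; set p := c' ord0.
  have hpr : p != r.
    by apply/negP => /eqP hp; move: (hm ord0) hI; rewrite -/p hp => ->.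
  split; first by rewrite occ1.
  case: (boolP (vstep e p r)) => hv; last first.
    by exists r; split; rewrite /vstep ?eqxx // occ1.
  have epr : e p r by move: hv; rewrite /vstep (negbTE hpr).
  have [q [hq hs]] := other p h2.
  exists q; split.
  - have erp : e r p by rewrite he eq_sym -he.
    by rewrite /vstep he hs -he erp orbT.
  - by rewrite occ1 eq_sym.
  - by rewrite /vstep negb_or eq_sym hq side.
have h1 : #|A| = 1 by apply/eqP; rewrite eqn_leq h2 hA0.
rewrite (minn_idPr (leq_trans h2 (leqnSn 1))) h1; split.
  apply: (@upper_one _ _ _ _ _ _ _ _ [ffun i : 'I_1 => xA]) => // r _.
  case hr: (r \in A).
    left; rewrite occ1 ffunE.
    move/eqP: h1 => /cards1P [y hy].
    by move: hxA hr; rewrite hy !inE => /eqP -> /eqP ->.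
  right; exists [ffun i : 'I_1 => r]; split; last by rewrite occ1 ffunE.
  by move=> i; rewrite !ffunE /vstep eAB ?hr ?orbT.
by move=> m; rewrite ltnS leqn0 => /eqP ->; exact: c_zero.
Qed.

End Bip.

Theorem proposition1 (T : finType) (e : rel T) (A : {set T}) :
  complete_bipartite e A ->
  [/\ c_number e (minn 2 (mindeg e)),
      cVr_number e (mindeg e),
      cV_number e (maxdeg e),
      cEr_number e (maxdeg e) &
      cE_number e (maxdeg e)].
Proof.
have main : forall A : {set T}, complete_bipartite e A -> #|A| <= #|~: A| ->
  [/\ c_number e (minn 2 (mindeg e)), cVr_number e (mindeg e),
      cV_number e (maxdeg e), cEr_number e (maxdeg e) & cE_number e (maxdeg e)].
  move=> B [/set0Pn [xA hxA] /set0Pn [xB hxB] he] hab.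
  have hxB' : xB \notin B by move: hxB; rewrite inE.
  rewrite (mindegE hxB' he hab) (maxdegE hxA he hab).
  split.
  - exact: (c_ok hxA hxB' he hab).
  - exact: (cVr_ok xA he hab).
  - exact: (cV_ok hxA hxB' he hab).
  - exact: (cEr_ok hxA hxB' he hab).
  - exact: (cE_ok hxA hxB' he hab).
move=> hc; case: (leqP #|A| #|~: A|) => hab.
  move: (main A hc hab). exact.

apply: (main (~: A)); last by rewrite setCK ltnW.
case: hc => h1 h2 he; split; rewrite ?setCK //.
by move=> x y; rewrite !inE he; case: (x \in A); case: (y \in A).
Qed.
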